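(* Let $T$ be a tiling and let $I=\{a,a+1,\dots,b\}$ with $2\le a\le b\le n-1$ be an interval contained in the basis $B(T)$. Then every triple $ijk\in\Lambda$ with $a-1\le i<j<k\le b+1$ belongs to $T$; i.e. $T(ext(I))\subseteq T$, where $ext(I)=\{a-1,\dots,b+1\}$ and $T(ext(I))$ is the set of all triples contained in $ext(I)$.
   Context: Fix an integer $n\ge 3$ and write $[n]=\{1,\dots,n\}$. Let $\Lambda$ be the set of 3-element subsets of $[n]$; a triple $\{i,j,k\}$ with $i<j<k$ is written $ijk$. For a 4-element subset $F=\{i<j<k<l\}$ of $[n]$, the stick of $F$ is the sequence $(ijk,\ ijl,\ ikl,\ jkl)$. A tiling (the inversion set of a rhombus tiling of the zonogon $Z(n;2)$) is a subset $T\subseteq\Lambda$ such that for every 4-element $F\subseteq[n]$, $T\cap\mathrm{stick}(F)$ is an initial segment or a final segment of the stick (empty set and whole stick allowed). The basis of a tiling $T$ is $B(T)=\{j\in\{2,\dots,n-1\}: (j-1)\,j\,(j+1)\in T\}$. *)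

(* Defs.v *)
From mathcomp Require Import all_boot.
Set Implicit Arguments. Unset Strict Implicit. Unset Printing Implicit Defensive.

(* A 3-subset {i<j<k} of [n] = {1..n} is encoded by the ordered triple (i,j,k).
   A candidate set T of triples is a boolean predicate on nat triples. *)
Definition in_Lambda (n i j k : nat) : bool := [&& 1 <= i, i < j, j < k & k <= n].

(* Stick of F = {i<j<k<l}: the sequence (ijk, ijl, ikl, jkl); here we record
   the membership pattern of T along the stick. *)
Definition stick_pattern (T : nat -> nat -> nat -> bool) (i j k l : nat) : seq bool :=
  [:: T i j k; T i j l; T i k l; T j k l].

Definition init_or_final (s : seq bool) : Prop :=
  exists m, m <= 4 /\
    (s = nseq m true ++ nseq (4 - m) false \/ s = nseq m false ++ nseq (4 - m) true).

Definition is_tiling (n : nat) (T : nat -> nat -> nat -> bool) : Prop :=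
  (forall i j k, T i j k -> in_Lambda n i j k) /\
  (forall i j k l, 1 <= i -> i < j -> j < k -> k < l -> l <= n ->
     init_or_final (stick_pattern T i j k l)).

Definition in_basis (n : nat) (T : nat -> nat -> nat -> bool) (j : nat) : bool :=
  [&& 2 <= j, j <= n - 1 & T j.-1 j j.+1].

(* Main.v *)
Require Import Defs.
From mathcomp Require Import all_boot.
From mathcomp Require Import zify.

Lemma iof_ends (x1 x2 x3 x4 : bool) :
  init_or_final [:: x1; x2; x3; x4] -> x1 -> x4 -> x2 && x3.
Proof.
case=> m [Hm [] E] h1 h4;
(do 5 (case: m Hm E => [|m] Hm E; [by case: E => *; subst| ])); by [].
Qed.

Theorem lemma5 (n : nat) (T : nat -> nat -> nat -> bool) (a b : nat) :
  3 <= n -> is_tiling n T ->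
  2 <= a -> a <= b -> b <= n - 1 ->
  (forall j, a <= j <= b -> in_basis n T j) ->
  forall i j k, a - 1 <= i -> i < j -> j < k -> k <= b + 1 -> T i j k.
Proof.
move=> Hn [_ Hst] Ha Hab Hb Hbas.
suff H : forall d i j k, k - i <= d -> a - 1 <= i -> i < j -> j < k -> k <= b + 1 -> T i j k.
  by move=> i j k; apply: (H (k - i)).
elim=> [|d IH] i j k Hd Hi Hij Hjk Hk; first by lia.
have [Hw|Hw] := leqP (k - i) 2.
  have Ej : j = i.+1 by lia.
  have Ek : k = j.+1 by lia.
  have := Hbas j; rewrite /in_basis; subst.
  have -> : (a <= i.+1 <= b) by lia.
  by move=> /(_ isT) /and3P [_ _].
have [Hj|Hj] := leqP j i.+1.
- have Ej : j = i.+1 by lia.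
  have := Hst i j j.+1 k; rewrite /stick_pattern.
  move=> /(_ ltac:(lia) ltac:(lia) ltac:(lia) ltac:(lia) ltac:(lia)) /iof_ends.
  move=> /(_ (IH _ _ _ _ _ _ _ _)) /(_ (IH _ _ _ _ _ _ _ _)).
  by move=> /(_ ltac:(lia) ltac:(lia) ltac:(lia) ltac:(lia) ltac:(lia))
            /(_ ltac:(lia) ltac:(lia) ltac:(lia) ltac:(lia) ltac:(lia)) /andP [].
- have := Hst i i.+1 j k; rewrite /stick_pattern.
  move=> /(_ ltac:(lia) ltac:(lia) ltac:(lia) ltac:(lia) ltac:(lia)) /iof_ends.
  move=> /(_ (IH _ _ _ _ _ _ _ _)) /(_ (IH _ _ _ _ _ _ _ _)).
  by move=> /(_ ltac:(lia) ltac:(lia) ltac:(lia) ltac:(lia) ltac:(lia))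
            /(_ ltac:(lia) ltac:(lia) ltac:(lia) ltac:(lia) ltac:(lia)) /andP [].
Qed.
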